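(* Let $(G,\theta)$ be a $p$-oriented profinite group and let $M$ be a Hilbert 90 module for $(G,\theta)$. Then $M$ is also a Hilbert 90 module for $(H,\theta|_H)$ for every closed subgroup $H$ of $G$.
   Context: A $p$-oriented profinite group is a pair $(G,\theta)$ with $G$ profinite and $\theta\colon G\to\mathbb Z_p^\times$ a continuous homomorphism. Let $S$ be the discrete $G$-module $\mathbb Q/\mathbb Z_{(p)}$ with $g$ acting by multiplication by $\theta(g)$. A Hilbert 90 module for $(G,\theta)$ is a discrete $G$-module $M$ such that (i) $pM=M$, (ii) the $p$-primary torsion subgroup $M\{p\}$ is isomorphic to $S$ as a $G$-module, and (iii) $H^1(H,M)=0$ for every open subgroup $H\subset G$. *)

(* Defs.v *)
From HB Require Import structures.
From mathcomp Require Import all_boot all_order all_algebra.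
From mathcomp Require Import all_classical all_reals all_analysis.
Set Implicit Arguments. Unset Strict Implicit. Unset Printing Implicit Defensive.
Import Order.TTheory GRing.Theory Num.Theory.
Local Open Scope classical_set_scope.
Local Open Scope ring_scope.

Record TopGroup (T : topologicalType) := {
  gmul : T -> T -> T;
  ginv : T -> T;
  gone : T;
  gmulA : forall x y z, gmul x (gmul y z) = gmul (gmul x y) z;
  gmul1 : forall x, gmul gone x = x /\ gmul x gone = x;
  gmulV : forall x, gmul (ginv x) x = gone /\ gmul x (ginv x) = gone;
  gmul_cont : continuous (fun xy : T * T => gmul xy.1 xy.2);
  ginv_cont : continuous ginv }.

Definition profinite (T : topologicalType) (G : TopGroup T) : Prop :=
  [/\ compact [set: T], hausdorff_space T & totally_disconnected [set: T]].

Definition is_subgroup T (G : TopGroup T) (H : set T) : Prop :=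
  [/\ H (gone G),
      (forall x y, H x -> H y -> H (gmul G x y)) &
      (forall x, H x -> H (ginv G x))].

Definition open_in (T : topologicalType) (K U : set T) : Prop :=
  U `<=` K /\ exists V : set T, open V /\ U = V `&` K.

(* x represents the p-adic integer with x n = its residue mod p^n *)
Definition Zp_elt (p : nat) (x : nat -> nat) : Prop :=
  forall n, (x n < p ^ n)%N /\ (x n.+1 %% p ^ n)%N = x n.

Definition Zp_unit (p : nat) (x : nat -> nat) : Prop :=
  Zp_elt p x /\ ~~ (p %| x 1%N)%N.

(* Continuity for the inverse-limit topology on Z_p: each coordinate map
   g |-> theta g n (into the discrete Z/p^n) is locally constant. *)
Definition p_orientation (p : nat) T (G : TopGroup T) (theta : T -> nat -> nat)
  : Prop :=
  [/\ forall g, Zp_unit p (theta g),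
      (forall g h n, theta (gmul G g h) n = (theta g n * theta h n %% p ^ n)%N) &
      (forall n k, open [set g | theta g n = k])].

Definition in_Zloc (p : nat) (q : rat) : Prop := ~~ (p %| `|denq q|)%N.

(* action of u in Z_p on the class of q in Q/Z_(p): if the p-part of the
   denominator of q is p^k, multiply q by the residue of u mod p^k
   (well defined modulo Z_(p)). *)
Definition actS (p : nat) (u : nat -> nat) (q : rat) : rat :=
  (u (logn p `|denq q|))%:R * q.

Section H90.
Variables (p : nat) (T : topologicalType) (G : TopGroup T)
          (theta : T -> nat -> nat) (M : zmodType) (act : T -> M -> M).

Definition discrete_module (K : set T) : Prop :=
  [/\ forall m, act (gone G) m = m,
      (forall g h m, K g -> K h -> act (gmul G g h) m = act g (act h m)),
      (forall g m m', K g -> act g (m + m') = act g m + act g m') &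
      (forall m, open_in K [set g | K g /\ act g m = m])].

Definition p_torsion (m : M) : Prop := exists n, m *+ (p ^ n) = 0.

(* M{p} is isomorphic to S as a K-module: an additive map phi : Q -> M with
   kernel exactly Z_(p) (so it induces an injection Q/Z_(p) -> M), image
   exactly M{p}, and K-equivariant for the theta-action on S. *)
Definition torsion_iso_S (K : set T) : Prop :=
  exists phi : rat -> M,
  [/\ forall q r, phi (q + r) = phi q + phi r,
      (forall q, phi q = 0 <-> in_Zloc p q),
      (forall m, p_torsion m <-> exists q, phi q = m) &
      (forall g q, K g -> phi (actS p (theta g) q) = act g (phi q))].

Definition cocycle (H : set T) (c : T -> M) : Prop :=
  (forall g h, H g -> H h -> c (gmul G g h) = c g + act g (c h)) /\
  (forall m, open_in H [set h | H h /\ c h = m]).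

Definition H1_vanishes (H : set T) : Prop :=
  forall c, cocycle H c -> exists m, forall h, H h -> c h = act h m - m.

Definition hilbert90 (K : set T) : Prop :=
  [/\ discrete_module K,
      (forall m : M, exists m' : M, m' *+ p = m),
      torsion_iso_S K &
      (forall H, H `<=` K -> is_subgroup G H -> open_in K H -> H1_vanishes H)].
End H90.

(* Main.v *)
Require Import Defs.
From HB Require Import structures.
From mathcomp Require Import all_boot all_order all_algebra.
From mathcomp Require Import all_classical all_reals all_analysis.

Set Implicit Arguments. Unset Strict Implicit. Unset Printing Implicit Defensive.
Import GRing.Theory.
Local Open Scope classical_set_scope.


Section GroupAlg.
Context (T : topologicalType) (G : TopGroup T).
Local Notation "x ** y" := (gmul G x y) (at level 40, left associativity).
Local Notation inv := (ginv G).
Local Notation one := (gone G).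

Lemma tmul1g x : one ** x = x. Proof. by case: (gmul1 G x). Qed.
Lemma tmulg1 x : x ** one = x. Proof. by case: (gmul1 G x). Qed.
Lemma tmulVg x : inv x ** x = one. Proof. by case: (gmulV G x). Qed.
Lemma tmulgV x : x ** inv x = one. Proof. by case: (gmulV G x). Qed.
Lemma tmulgA x y z : x ** (y ** z) = x ** y ** z. Proof. exact: gmulA. Qed.
Lemma tmulKg x y : inv x ** (x ** y) = y.
Proof. by rewrite tmulgA tmulVg tmul1g. Qed.
Lemma tmulKVg x y : x ** (inv x ** y) = y.
Proof. by rewrite tmulgA tmulgV tmul1g. Qed.
Lemma tmulgK x y : y ** x ** inv x = y.
Proof. by rewrite -tmulgA tmulgV tmulg1. Qed.
Lemma tmulgKV x y : y ** inv x ** x = y.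
Proof. by rewrite -tmulgA tmulVg tmulg1. Qed.
Lemma tinv_uniq x y : x ** y = one -> y = inv x.
Proof. by move=> h; rewrite -(tmulKg x y) h tmulg1. Qed.
Lemma tinvK x : inv (inv x) = x.
Proof. by symmetry; apply: tinv_uniq; rewrite tmulVg. Qed.
Lemma tinvM x y : inv (x ** y) = inv y ** inv x.
Proof. by symmetry; apply: tinv_uniq; rewrite -tmulgA tmulKVg tmulgV. Qed.
Lemma tinv1 : inv one = one.
Proof. by symmetry; apply: tinv_uniq; rewrite tmulg1. Qed.

Lemma near2_snd (c x : T) (P : T -> T -> Prop) :
  (\forall a \near c & b \near x, P a b) -> \forall b \near x, P c b.
Proof.
rewrite /prop_near2 /filter_prod => -[[A B] /= [nA nB] sAB].
apply: filterS nB => b Bb.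
by apply: (sAB (c, b)); split => //; exact: nbhs_singleton.
Qed.

Lemma near2_fst (c x : T) (P : T -> T -> Prop) :
  (\forall a \near x & b \near c, P a b) -> \forall a \near x, P a c.
Proof.
rewrite /prop_near2 /filter_prod => -[[A B] /= [nA nB] sAB].
apply: filterS nA => a Aa.
by apply: (sAB (a, c)); split => //; exact: nbhs_singleton.
Qed.

Lemma mul_near (x y : T) (V : set T) : open V -> V (x ** y) ->
  \forall a \near x & b \near y, V (a ** b).
Proof.
move=> oV Vxy; have := @gmul_cont _ G (x, y); move=> /(_ V) h.
exact: h (open_nbhs_nbhs (conj oV Vxy)).
Qed.

Lemma inv_near (x : T) (V : set T) : open V -> V (inv x) ->
  \forall a \near x, V (inv a).
Proof.
move=> oV Vx; have := @ginv_cont _ G x; move=> /(_ V) h.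
exact: h (open_nbhs_nbhs (conj oV Vx)).
Qed.
End GroupAlg.


Section TopGrp.
Context (T : topologicalType) (G : TopGroup T).
Local Notation "x ** y" := (gmul G x y) (at level 40, left associativity).
Local Notation inv := (ginv G).
Local Notation one := (gone G).

Lemma tcvgM (I : Type) (F : set_system I) {FF : Filter F} (f g : I -> T) a b :
  f @ F --> a -> g @ F --> b -> (fun x => f x ** g x) @ F --> a ** b.
Proof.
move=> fa gb; apply: (continuous2_cvg _ _ fa gb).
exact: (@gmul_cont _ G (a, b)).
Qed.

Lemma tcvgV (I : Type) (F : set_system I) {FF : Filter F} (f : I -> T) a :
  f @ F --> a -> (fun x => inv (f x)) @ F --> inv a.
Proof.
move=> fa; apply: (continuous_cvg _ _ fa).
exact: (@ginv_cont _ G a).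
Qed.

Lemma tsubgroup_open (S : set T) : is_subgroup G S -> nbhs one S -> open S.
Proof.
case=> S1 SM SV nS; rewrite openE => x Sx.
have : (fun a => inv x ** a) @ x --> inv x ** x.
  by apply: tcvgM; [exact: cvg_cst | exact: cvg_id].
rewrite tmulVg => /(_ S nS) /= h.
have h' : nbhs x [set a | S (inv x ** a)] := h.
rewrite /interior /=; apply: filterS h' => a /= Sa.
by rewrite -(@tmulKVg _ G x a); apply: SM.
Qed.

End TopGrp.


Section ZeroDim.
Context (T : topologicalType) (hT : hausdorff_space T) (cT : compact [set: T])
  (tdT : totally_disconnected [set: T]).

Lemma tsep_closed (A1 A2 : set T) : closed A1 -> closed A2 ->
  (forall y, A1 y -> A2 y -> False) ->
  exists U1 U2, [/\ open U1, open U2, A1 `<=` U1, A2 `<=` U2 &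
    forall y, U1 y -> U2 y -> False].
Proof.
move=> cl1 cl2 disj.
have nT := compact_normal hT cT.
have snA : set_nbhs A1 (~` A2).
  move=> y A1y; apply: open_nbhs_nbhs; split; first exact: closed_openC.
  by move=> A2y; exact: (disj y A1y A2y).
have [S snS clS] := nT A1 cl1 (~` A2) snA.
have [C [oC A1C CS]] := (set_nbhsP _ _).1 snS.
exists C, (~` closure S); split => //.
- exact/closed_openC/closed_closure.
- by move=> y A2y clSy; exact: (clS y clSy A2y).
- by move=> y Cy; apply; apply: subset_closure; exact: CS.
Qed.

Lemma tLsep (x : T) (K : set T) : closed K ->
  (forall y, K y -> exists C, [/\ clopen C, C x & ~ C y]) ->
  exists D, [/\ clopen D, D x & forall y, D y -> ~ K y].
Proof.
move=> clK hsep.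
have cK : compact K by apply: (subclosed_compact clK cT).
pose F := filter_from [set C : set T | clopen C /\ C x]
  (fun C => [set D : set T | [/\ clopen D, D x & D `<=` C]]).
have FF : Filter F.
  apply: filter_from_filter.
    by exists setT; split; [exact: clopenT|].
  move=> C1 C2 [c1 x1] [c2 x2]; exists (C1 `&` C2).
    by split; [exact: clopenI|].
  by move=> D [cD Dx DC]; split; split=> // y /DC [].
have := (compact_near_coveringP K).1 cK (set T) F (fun D y => ~ D y) FF.
case.
- move=> y Ky; have [C [cC Cx nCy]] := hsep y Ky.
  rewrite /prop_near2 /filter_prod.
  exists (~` C, [set D : set T | [/\ clopen D, D x & D `<=` C]]).
    split; last by exists C.
    apply: open_nbhs_nbhs; split=> //; exact: closed_openC (cC.2).
  by move=> [y' D] [/= nCy' [_ _ DC]] Dy'; exact: nCy' (DC _ Dy').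
- move=> C [cC Cx] /(_ C) h.
  exists C; split => // y Cy Ky.
  exact: (h (And3 cC Cx (fun _ p => p)) y Ky Cy).
Qed.

Definition tquasi (x : T) := [set y : T | forall C, clopen C -> C x -> C y].

Lemma tquasi_closed x : closed (tquasi x).
Proof.
move=> y clQy C cC Cx; apply: cC.2.
by apply: (closureS _ clQy) => z /(_ C cC Cx).
Qed.

Lemma tQsplit (x : T) (A1 A2 : set T) : closed A1 -> closed A2 ->
  (forall y, A1 y -> A2 y -> False) ->
  tquasi x `<=` A1 `|` A2 -> A1 x -> tquasi x `<=` A1.
Proof.
move=> cl1 cl2 disj QA A1x.
have [U1 [U2 [oU1 oU2 A1U1 A2U2 dU]]] := tsep_closed cl1 cl2 disj.
have [D [cD Dx DK]] : exists D, [/\ clopen D, D x &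
    forall y, D y -> ~ (~` (U1 `|` U2)) y].
  apply: tLsep; first exact/open_closedC/openU.
  move=> y nUy.
  have nQy : ~ tquasi x y.
    move=> /QA [/A1U1 ?|/A2U2 ?]; apply: nUy; by [left|right].
  have [C nCy] : exists C, ~ (clopen C -> C x -> C y).
    by apply/existsNP => hall; apply: nQy => C; exact: hall.
  exists C; move/not_implyP: nCy => [cC /not_implyP [Cx nCy]].
  by split.
have DU1 : clopen (D `&` U1).
  split; first exact: openI (cD.1) oU1.
  have -> : D `&` U1 = D `&` ~` U2.
    rewrite eqEsubset; split => y [Dy Uy]; split => //.
      by move=> U2y; exact: (dU y Uy U2y).
    have := DK y Dy; move/contrapT => [//|U2y]; by [].
  apply: closedI (cD.2) _; exact: open_closedC.
move=> y Qy.
have [Dy U1y] := Qy _ DU1 (conj Dx (A1U1 _ A1x)).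
case: (QA y Qy) => // A2y.
by exfalso; exact: (dU y U1y (A2U2 _ A2y)).
Qed.

Lemma tquasi_connected x : connected (tquasi x).
Proof.
move=> B [b Bb] [C1 oC1 BC1] [C2 cC2 BC2].
have Qx : tquasi x x by [].
have cB : closed B by rewrite BC2; apply: closedI; [exact: tquasi_closed|exact: cC2].
have cB' : closed (tquasi x `&` ~` C1).
  by apply: closedI; [exact: tquasi_closed|exact: open_closedC].
have dis : forall y, B y -> (tquasi x `&` ~` C1) y -> False.
  by move=> y; rewrite BC1 => -[_ ?] [_].
have cov : tquasi x `<=` B `|` (tquasi x `&` ~` C1).
  move=> y Qy; have [C1y|nC1y] := pselect (C1 y).
    by left; rewrite BC1.
  by right.
have [Bx|nBx] := pselect (B x).
  rewrite eqEsubset; split; first by rewrite BC1 => y [].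
  by apply: tQsplit cB cB' dis cov Bx.
exfalso.
have xB' : (tquasi x `&` ~` C1) x.
  by case: (cov x Qx).
have dis' : forall y, (tquasi x `&` ~` C1) y -> B y -> False.
  by move=> y h1 h2; exact: dis y h2 h1.
have cov' : tquasi x `<=` (tquasi x `&` ~` C1) `|` B.
  by move=> y /cov [?|?]; [right|left].
have Qb : tquasi x b by move: Bb; rewrite BC1 => -[].
have := tQsplit cB' cB dis' cov' xB' Qb.
by move=> [_]; move: Bb; rewrite BC1 => -[].
Qed.

Lemma tquasi_point x : tquasi x `<=` [set x].
Proof.
rewrite -(@tdT x I) => y Qy.
by exists (tquasi x) => //; split => //; exact: tquasi_connected.
Qed.

Lemma tzero_dim_nbhs (x : T) (V : set T) : nbhs x V ->
  exists W, [/\ clopen W, W x & W `<=` V].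
Proof.
move=> nV.
have [D [cD Dx DK]] : exists D, [/\ clopen D, D x &
    forall y, D y -> ~ (~` V°) y].
  apply: tLsep; first exact/open_closedC/open_interior.
  move=> y nVy.
  have yx : y <> x by move=> yx; apply: nVy; rewrite yx.
  have nQy : ~ tquasi x y by move=> /tquasi_point.
  have [C nCy] : exists C, ~ (clopen C -> C x -> C y).
    by apply/existsNP => hall; apply: nQy => C; exact: hall.
  exists C; move/not_implyP: nCy => [cC /not_implyP [Cx nCy]].
  by split.
exists D; split => // y Dy; apply: interior_subset.
by have := DK y Dy; move/contrapT.
Qed.

End ZeroDim.


Section VanDantzig.
Context (T : topologicalType) (G : TopGroup T).
Local Notation "x ** y" := (gmul G x y) (at level 40, left associativity).
Local Notation inv := (ginv G).
Local Notation one := (gone G).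

Lemma tconjM y a b : inv y ** (a ** b) ** y = (inv y ** a ** y) ** (inv y ** b ** y).
Proof. by rewrite !tmulgA tmulgK. Qed.
Lemma tconjV y a : inv y ** inv a ** y = inv (inv y ** a ** y).
Proof. by rewrite !tinvM tinvK tmulgA. Qed.
Lemma tconj1 y : inv y ** one ** y = one.
Proof. by rewrite tmulg1 tmulVg. Qed.
Lemma tconjJ y z n : inv z ** (inv y ** n ** y) ** z = inv (y ** z) ** n ** (y ** z).
Proof. by rewrite tinvM !tmulgA. Qed.

Context (hT : hausdorff_space T) (cT : compact [set: T])
  (tdT : totally_disconnected [set: T]).

Lemma tsmall_subgroup (V : set T) : nbhs one V ->
  exists N, [/\ is_subgroup G N, open N, N `<=` V & N one].
Proof.
move=> nV.
have [W [cW W1 WV]] := tzero_dim_nbhs hT cT tdT nV.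
have cW' : compact W by apply: (subclosed_compact cW.2 cT).
have hB : nbhs one [set b | forall w, W w -> W (w ** b)].
  apply: ((compact_near_coveringP W).1 cW' T (nbhs one) (fun b w => W (w ** b))).
  move=> w Ww.
  have nW : nbhs (w ** one) W by rewrite tmulg1; exact: (open_nbhs_nbhs (conj cW.1 Ww)).
  exact: (@gmul_cont _ G (w, one) W nW).
have hB' : nbhs one [set b | forall w, W w -> W (w ** inv b)].
  have h1 : (fun b => inv b) @ (nbhs one) --> one.
    by rewrite -{2}tinv1; apply: tcvgV; exact: cvg_id.
  exact: h1 _ hB.
pose N := [set g | forall w, W w -> W (w ** g) /\ W (w ** inv g)].
have sN : is_subgroup G N.
  split.
  - by move=> w Ww; rewrite tinv1 tmulg1.
  - move=> g h Ng Nh w Ww; rewrite tinvM !tmulgA; split.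
      by apply: (Nh _ (Ng _ Ww).1).1.
    by apply: (Ng _ (Nh _ Ww).2).2.
  - by move=> g Ng w Ww; rewrite tinvK; split; [exact: (Ng _ Ww).2|exact: (Ng _ Ww).1].
have nN : nbhs one N.
  by apply: filterS (filterI hB hB') => b [h1 h2] w Ww; split; [exact: h1|exact: h2].
exists N; split => //.
- exact: (tsubgroup_open sN nN).
- by move=> g /(_ one W1) [+ _]; rewrite tmul1g => /WV.
- by case: sN.
Qed.

Lemma tnormal_core (N : set T) : is_subgroup G N -> nbhs one N ->
  exists N', [/\ is_subgroup G N', open N', N' `<=` N &
    forall y n, N' n -> N' (inv y ** n ** y)].
Proof.
move=> [N1 NM NV] nN.
pose N' := [set n | forall y, N (inv y ** n ** y)].
have sN' : is_subgroup G N'.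
  split.
  - by move=> y; rewrite tconj1.
  - by move=> a b Na Nb y; rewrite tconjM; apply: NM.
  - by move=> a Na y; rewrite tconjV; apply: NV.
have nN' : nbhs one N'.
  suff h : nbhs one [set n | [set: T] `<=` (fun y => N (inv y ** n ** y))].
    by apply: filterS h => n hn y; exact: hn.
  apply: ((compact_near_coveringP setT).1 cT T (nbhs one)
     (fun n y => N (inv y ** n ** y))) => y _.
  have hc : (fun p : T * T => inv p.1 ** p.2 ** p.1) @ nbhs (y, one) -->
      inv y ** one ** y.
    apply: tcvgM; first apply: tcvgM.
    - by apply: tcvgV; exact: cvg_fst.
    - exact: cvg_snd.
    - exact: cvg_fst.
  rewrite tconj1 in hc; exact: hc _ nN.
exists N'; split => //.
- exact: (tsubgroup_open sN' nN').
- by move=> n /(_ one); rewrite tinv1 tmul1g tmulg1.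
- by move=> y n Nn z; rewrite tconjJ; apply: Nn.
Qed.
End VanDantzig.


Lemma finite_values (T : topologicalType) (M : zmodType) (K : set T) (c : T -> M) :
  compact K -> (forall m, open_in K [set h | K h /\ c h = m]) ->
  exists s : seq M, forall h, K h -> c h \in s.
Proof.
move=> cK oc.
pose F := filter_from [set: seq M] (fun s0 => [set s : seq M | {subset s0 <= s}]).
have FF : Filter F.
  apply: filter_from_filter; first by exists [::].
  move=> s0 s1 _ _; exists (s0 ++ s1) => // s hs; split => x xs; apply: hs;
    by rewrite mem_cat xs ?orbT.
have := (compact_near_coveringP K).1 cK (seq M) F
   (fun s h => K h -> c h \in s) FF.
case.
- move=> x Kx.
  have [_ [V [oV eV]]] := oc (c x).
  have Vx : V x.
    have : [set h | K h /\ c h = c x] x by split.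
    by rewrite eV => -[].
  rewrite /prop_near2 /filter_prod.
  exists (V, [set s : seq M | {subset [:: c x] <= s}]).
    by split; [exact: (open_nbhs_nbhs (conj oV Vx))| exists [:: c x]].
  move=> [x' s] [/= Vx' hs] Kx'.
  have : (V `&` K) x' by split.
  rewrite -eV => -[_ ->]; apply: hs; exact: mem_head.
- move=> s0 _ h; exists s0 => k Kk.
  by apply: (h s0 _ k Kk Kk).
Qed.

Unset Implicit Arguments.
Theorem lemma2p5 (p : nat) (T : topologicalType) (G : TopGroup T)
    (theta : T -> nat -> nat) (M : zmodType) (act : T -> M -> M) :
  prime p -> profinite G -> p_orientation p G theta ->
  hilbert90 p G theta act [set: T] ->
  forall H : set T, closed H -> is_subgroup G H ->
    hilbert90 p G theta act H.
Proof.
move=> pp [cT hT tdT] orient [[dm1 dm2 dm3 dm4] div [phi [ph1 ph2 ph3 ph4]] h90]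
  H clH sH.
have stab1 (m : M) (g : T) : act g m = m -> nbhs g [set g' | act g' m = m].
  move=> e; have [_ [V [oV eV]]] := dm4 m.
  have E g' : act g' m = m <-> V g'.
    split => [e'|Vg'].
      have : [set g | [set: T] g /\ act g m = m] g' by split.
      by rewrite eV => -[].
    have : (V `&` [set: T]) g' by split.
    by rewrite -eV => -[].
  apply: filterS (open_nbhs_nbhs (conj oV ((E g).1 e))) => g'; exact: (E g').2.
have stab (s : seq M) (g : T) : (forall m, m \in s -> act g m = m) ->
    nbhs g [set g' | forall m, m \in s -> act g' m = m].
  elim: s => [|m s IH] hs.
    by apply: filterS filterT => g' _ m.
  have h1 := stab1 m g (hs m (mem_head _ _)).
  have h2 := IH (fun m' ms => hs m' (@mem_behead _ (m :: s) _ ms)).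
  apply: filterS (filterI h1 h2) => g' [e1 e2] m'.
  by rewrite in_cons => /orP [/eqP -> //|]; exact: e2.
split.
- split; [exact: dm1 | by move=> g h m _ _; exact: dm2 | by move=> g m m' _; exact: dm3 | move=> m].
  have [_ [V [oV eV]]] := dm4 m.
  split; first by move=> g [].
  exists V; split => //.
  rewrite eqEsubset; split => g.
    move=> [Hg e].
    have : [set g | [set: T] g /\ act g m = m] g by split.
    by rewrite eV => -[].
  move=> [Vg Hg]; have : (V `&` [set: T]) g by split.
  by rewrite -eV => -[].
- exact: div.
- by exists phi; split => // g q Hg; exact: ph4.
move=> H' sH'H sgH' [_ [V0 [oV0 eH']]] c [cc1 cc2].
have [H1 HM HV] := sH.
have [H'1 H'M H'V] := sgH'.
have act0 (g : T) : act g 0%R = 0%R.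
  have e := dm3 g 0%R 0%R I; rewrite addr0 in e.
  by apply: (@addrI _ (act g 0%R)); rewrite addr0 -e.
have inH' (h : T) : H' h <-> V0 h /\ H h.
  split => [Hh|[Vh Hh]].
    by have : (V0 `&` H) h by rewrite -eH'.
  by rewrite eH'.
have clH' : closed H'.
  move=> y clH'y.
  have Hy : H y by apply: clH; apply: (closureS _ clH'y) => z /inH' [].
  have nY : nbhs y [set a | V0 (gmul G (ginv G a) y)].
    have hc : (fun a => gmul G (ginv G a) y) @ y --> gmul G (ginv G y) y.
      by apply: tcvgM; [apply: tcvgV; exact: cvg_id | exact: cvg_cst].
    rewrite tmulVg in hc; apply: hc.
    have : H' (gone G) by [].
    by move/inH' => [V1 _]; exact: (open_nbhs_nbhs (conj oV0 V1)).
  have [h [H'h Yh]] := clH'y _ nY.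
  have Hh : H h by have /inH' [] := H'h.
  have : H' (gmul G (ginv G h) y) by apply/inH'; split => //; apply: HM => //; exact: HV.
  by move=> H'k; rewrite -(@tmulKVg _ G h y); apply: H'M.
have cH' : compact H' by apply: (subclosed_compact clH' cT).
have [s hs] := finite_values cH' cc2.
have c1 : c (gone G) = 0%R.
  have := cc1 _ _ H'1 H'1; rewrite tmulg1 dm1 => e.
  by apply: (@addrI _ (c (gone G))); rewrite addr0 -e.
have [_ [V1 [oV1 eV1]]] := cc2 0%R.
have inV1 (h : T) : H' h -> V1 h -> c h = 0%R.
  move=> H'h V1h; have : (V1 `&` H') h by split.
  by rewrite -eV1 => -[].
have V1one : V1 (gone G).
  have hh : [set h | H' h /\ c h = 0%R] (gone G) by split.
  by move: hh; rewrite eV1 => -[].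
have nV : nbhs (gone G) (V1 `&` [set g | forall m, m \in s -> act g m = m]).
  apply: filterI; first exact: (open_nbhs_nbhs (conj oV1 V1one)).
  by apply: stab => m _; rewrite dm1.
have [N0 [sN0 oN0 N0V N01]] := tsmall_subgroup hT cT tdT nV.
have [N [sN oN NN0 nrmN]] := tnormal_core cT sN0 (open_nbhs_nbhs (conj oN0 N01)).
have [N1 NM NVv] := sN.
have NV1 n : N n -> V1 n by move=> /NN0 /N0V [].
have Nstab n m : N n -> m \in s -> act n m = m by move=> /NN0 /N0V [_ ]; apply.
pose U := [set u | exists h n, [/\ H' h, N n & u = gmul G h n]].
have sU : is_subgroup G U.
  split.
  - by exists (gone G), (gone G); rewrite tmulg1.
  - move=> u1 u2 [h1 [n1 [H1h N1n ->]]] [h2 [n2 [H2h N2n ->]]].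
    exists (gmul G h1 h2), (gmul G (gmul G (ginv G h2) (gmul G n1 h2)) n2).
    split; first exact: H'M.
      by apply: NM => //; rewrite tmulgA; exact: nrmN.
    by rewrite !tmulgA tmulgK.
  - move=> u [h [n [Hh Nn ->]]].
    exists (ginv G h), (gmul G (gmul G (ginv G (ginv G h)) (ginv G n)) (ginv G h)).
    split; first exact: H'V.
      by apply: nrmN; exact: NVv.
    by rewrite tinvM tinvK !tmulgA tmulVg tmul1g.
have NU n : N n -> U n by move=> Nn; exists (gone G), n; rewrite tmul1g.
have oU : open U.
  apply: (tsubgroup_open sU); apply: filterS (open_nbhs_nbhs (conj oN N1)).
  exact: NU.
pose c' u := xget 0%R [set m | exists h n, [/\ H' h, N n, u = gmul G h n & c h = m]].
have c'E h n : H' h -> N n -> c' (gmul G h n) = c h.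
  move=> Hh Nn.
  have [h2 [n2 [Hh2 Nn2 e <-]]] : exists h0 n0,
      [/\ H' h0, N n0, gmul G h n = gmul G h0 n0 & c h0 = c' (gmul G h n)].
    apply: (@xgetI _ 0%R [set m | exists h0 n0,
      [/\ H' h0, N n0, gmul G h n = gmul G h0 n0 & c h0 = m]] (c h)).
    by exists h, n.
  have ek : gmul G (ginv G h2) h = gmul G n2 (ginv G n).
    by rewrite -(@tmulgK _ G n h) e -tmulgA tmulKg.
  have Hk : H' (gmul G (ginv G h2) h) by apply: H'M => //; exact: H'V.
  have Nk : N (gmul G (ginv G h2) h) by rewrite ek; apply: NM => //; exact: NVv.
  have ck := inV1 _ Hk (NV1 _ Nk).
  have := cc1 _ _ Hh2 Hk; by rewrite tmulKVg ck act0 addr0.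
have ccU : cocycle G act U c'.
  split.
  - move=> u1 u2 [h1 [n1 [H1h N1n ->]]] [h2 [n2 [H2h N2n ->]]].
    have -> : gmul G (gmul G h1 n1) (gmul G h2 n2) =
        gmul G (gmul G h1 h2) (gmul G (gmul G (ginv G h2) (gmul G n1 h2)) n2).
      by rewrite !tmulgA tmulgK.
    rewrite !c'E //; last 2 first.
    + exact: H'M.
    + by apply: NM => //; rewrite tmulgA; exact: nrmN.
    by rewrite cc1 // dm2 // (Nstab n1 (c h2)) //; exact: hs.
  - move=> m; split; first by move=> u [].
    exists [set x | exists h, [/\ H' h, c h = m & N (gmul G (ginv G h) x)]].
    split.
      rewrite openE => x [h [Hh chm Nx]].
      have hc : (fun a => gmul G (ginv G h) a) @ x --> gmul G (ginv G h) x.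
        by apply: tcvgM; [exact: cvg_cst | exact: cvg_id].
      have h' : nbhs x [set a | N (gmul G (ginv G h) a)] :=
        hc _ (open_nbhs_nbhs (conj oN Nx)).
      by rewrite /interior /=; apply: filterS h' => a Na; exists h.
    rewrite eqEsubset; split => u.
      move=> [[h [n [Hh Nn ->]]] <-]; split; last by exists h, n.
      by exists h; rewrite c'E // tmulKg.
    move=> [[h [Hh chm Nx]] Uu]; split => //.
    rewrite -(@tmulKVg _ G h u) (c'E h (gmul G (ginv G h) u)) //.
have [m hm] := h90 _ (@subsetT _ U) sU (conj (@subsetT _ U)
   (ex_intro _ U (conj oU (esym (setIT U))))) c' ccU.
exists m => h Hh.
have := c'E h (gone G) Hh N1; rewrite tmulg1 => <-.
by apply: hm; exists h, (gone G); rewrite tmulg1.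
Qed.
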